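(* Let $f$ be a transformation of a finite set $\Omega$ and let $G$ be a group of permutations of $\Omega$. If there exists $g\in G$ such that $\mathrm{rank}(fgf)=\mathrm{rank}(f)$, then there exists an idempotent $e$ in the semigroup $\langle f,G\rangle$ such that $e$ and $f$ have the same kernel.
   Context: Maps act on $\Omega$ and $fgf$ denotes ''apply $f$, then $g$, then $f$''. The rank of a map $h$ is $|\Omega h|$; the kernel of $h$ is the partition of $\Omega$ induced by the equivalence relation $\{(x,y): xh=yh\}$. An idempotent is a map $e$ with $e\circ e=e$. *)

(* Defs.v *)
(* Maps on a finite set Omega = T : finType are finite
   functions {ffun T -> T}; maps act on the right, so [fcomp a b] is
   "apply a, then b". *)
From mathcomp Require Import all_boot fingroup perm.
Set Implicit Arguments. Unset Strict Implicit. Unset Printing Implicit Defensive.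

Section Trans.
Variable T : finType.

Definition fcomp (a b : {ffun T -> T}) : {ffun T -> T} := [ffun x => b (a x)].

Definition perm_fun (g : {perm T}) : {ffun T -> T} := [ffun x => g x].

Definition trank (h : {ffun T -> T}) : nat := #|[set h x | x : T]|.

Definition tker (h : {ffun T -> T}) : {set {set T}} :=
  [set [set y | h y == h x] | x : T].

Definition tidem (e : {ffun T -> T}) : Prop := fcomp e e = e.

Inductive in_sgen (f : {ffun T -> T}) (G : {group {perm T}}) :
    {ffun T -> T} -> Prop :=
  | sgen_f : in_sgen f G f
  | sgen_G g : g \in G -> in_sgen f G (perm_fun g)
  | sgen_comp a b : in_sgen f G a -> in_sgen f G b -> in_sgen f G (fcomp a b).

End Trans.

(* Main.v *)
Require Import Defs.
From mathcomp Require Import all_boot fingroup perm.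
Set Implicit Arguments. Unset Strict Implicit.

Section S.
Variables (T : finType) (f : {ffun T -> T}) (G : {group {perm T}}) (g : {perm T}).

Definition U := fcomp f (perm_fun g).
Fixpoint pw (n : nat) : {ffun T -> T} :=
  match n with 0 => U | n.+1 => fcomp (pw n) U end.
Definition v (x : T) := g (f x).

Lemma pwE n x : pw n x = iter n.+1 v x.
Proof.
elim: n x => [|n IH] x; first by rewrite /= /U /fcomp /perm_fun !ffunE.
by rewrite /= /fcomp ffunE IH /U /perm_fun !ffunE.
Qed.

Lemma pw_sgen n : g \in G -> in_sgen f G (pw n).
Proof.
move=> gG; have hU : in_sgen f G U by apply: sgen_comp; [apply: sgen_f|apply: sgen_G].
by elim: n => [|n IH] //=; apply: sgen_comp.
Qed.

Hypothesis Hr : trank (fcomp (fcomp f (perm_fun g)) f) = trank f.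

Lemma finj : {in [set g (f x) | x : T] &, injective f}.
Proof.
apply/imset_injP.
have -> : f @: [set g (f x) | x : T] = [set fcomp (fcomp f (perm_fun g)) f x | x : T].
  rewrite -imset_comp; apply: eq_imset => x /=.
  by rewrite /fcomp /perm_fun !ffunE.
rewrite -/(trank _) Hr /trank.
have -> : [set g (f x) | x : T] = g @: [set f x | x : T] by rewrite -imset_comp.
by rewrite card_imset //; apply: perm_inj.
Qed.

Lemma vinj a b : v (v a) = v (v b) -> v a = v b.
Proof.
rewrite /v => /perm_inj H.
apply: (@finj (g (f a)) (g (f b))) => //; apply/imsetP; by eexists.
Qed.

Lemma iter_cancel n c c' : iter n v (v c) = iter n v (v c') -> v c = v c'.
Proof.
elim: n c c' => [|n IH] c c' //=.
rewrite -!iterSr /= => E; apply: vinj; apply: IH; rewrite -!iterSr; exact: E.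
Qed.

End S.

Theorem lemma11 (T : finType) (f : {ffun T -> T}) (G : {group {perm T}}) :
  (exists2 g : {perm T}, g \in G &
     trank (fcomp (fcomp f (perm_fun g)) f) = trank f) ->
  exists e : {ffun T -> T},
    [/\ in_sgen f G e, tidem e & tker e = tker f].
Proof.
case=> g gG Hr.
pose N := #|{ffun T -> T}|.
have [i [j [lij Eij]]] : exists i j : nat, i < j /\ pw f g i = pw f g j.
  case: (boolP [forall i : 'I_N.+1, forall j : 'I_N.+1,
                   (i < j) ==> (pw f g i != pw f g j)]) => H.
  - have inj : injective (fun i : 'I_N.+1 => pw f g i).
      move=> i j Eij; apply/eqP; case: (ltngtP i j) => h.
      + by move/forallP: H => /(_ i) /forallP /(_ j); rewrite h Eij eqxx.
      + by move/forallP: H => /(_ j) /forallP /(_ i); rewrite h Eij eqxx.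
      + by apply/eqP; apply: val_inj.
    by have := leq_card _ inj; rewrite card_ord ltnn.
  - move/forallPn: H => [i /forallPn [j]]; rewrite negb_imply negbK => /andP [h /eqP E].
    by exists i, j.
have Hd : forall x, v f g x = iter (j - i).+1 (v f g) x.
  move=> x; have := congr1 (fun h : {ffun T -> T} => h x) Eij; rewrite /= !pwE.
  have -> : j.+1 = i + (j - i).+1 by rewrite addnS subnKC // ltnW.
  rewrite iterD iterSr => /iter_cancel; apply => //.
set d := j - i in Hd. have d0 : 0 < d by rewrite subn_gt0. clearbody d.
exists (pw f g d.-1); split.
- exact: pw_sgen.
- apply/ffunP => x; rewrite /fcomp ffunE !pwE prednK //.
  case: d d0 Hd => [//|k] _ Hd.
  by rewrite iterSr -[v f g (iter _ _ _)]iterS -Hd -iterSr.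
- rewrite /tker; apply: eq_imset => x; apply/setP => y; rewrite !inE !pwE prednK //.
  case: d d0 Hd => [//|k] _ Hd.
  rewrite !iterSr; apply/eqP/eqP => [/(iter_cancel Hr) | E].
    by rewrite /v => /perm_inj.
  by rewrite /v E.
Qed.
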